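(* Let $S=\operatorname{FInv}\langle X\mid R\rangle$ be the $F$-inverse monoid presented by generators $X$ and a symmetric relation $R\subseteq\mathbb{I}\mathfrak{m}_X\times\mathbb{I}\mathfrak{m}_X$, and let $G$ be its greatest group image. Then the closure operators $c_R$ and $c_S$ on $\operatorname{Sub}\Gamma_X$ coincide.
   Context: $F$-inverse monoids (inverse monoids in which each $\sigma$-class has a greatest element $s^{\mathfrak m}$) form a variety in signature $(\cdot,1,{}^{-1},{}^{\mathfrak m})$; $\operatorname{FInv}\langle X\mid R\rangle$ is the quotient of the free $F$-inverse monoid on $X$ by the congruence generated by $R$, $X$-generated via the images of $X$. $\mathbb{I}\mathfrak{m}_X$ is the set of terms $u_0v_1^{\mathfrak m}u_1\cdots v_n^{\mathfrak m}u_n$ ($u_i,v_i\in(X\cup X^{-1})^*$); $w_S$, $w_G$ denote values. $\Gamma_X$ is the Cayley graph of $G$ (vertices $G$, edge labeled $x$ from $g$ to $gx_G$, $x\in X\cup X^{-1}$, with inverse edges) and $\operatorname{Sub}\Gamma_X$ its lattice of subgraphs (closed under endpoints and inverse edges). The journey labeled $w$ from $g$ is $(g\overline{u_0},g(u_0v_1)_G\overline{u_1},\dots,g(u_0v_1\cdots u_{n-1}v_n)_G\overline{u_n})$, where $h\overline u$ is the path from $h$ labeled by the word $u$; $w$ labels a journey in $\Delta$ from $g$ to $h$ if $gw_G=h$ and all these paths lie in $\Delta$. For a symmetric relation $Q$ on $\mathbb{I}\mathfrak{m}_X$ whose pairs are equal in $G$, $c_Q$ is the closure operator on $\operatorname{Sub}\Gamma_X$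 whose closed graphs are those $\Delta$ such that for all $(u,v)\in Q$ and $g,h\in V(\Delta)$, $u$ labels a journey in $\Delta$ from $g$ to $h$ iff $v$ does ($\Delta^{c_Q}$ is the intersection of closed graphs containing $\Delta$); $c_S=c_Q$ for $Q=\{(u,v):u_S=v_S\}$. *)

(* Defs.v *)
From Stdlib Require Import List.
Import ListNotations.
Set Implicit Arguments.

Record FInvMonoid := {
  fcar :> Type;
  fmul : fcar -> fcar -> fcar;
  fone : fcar;
  finv : fcar -> fcar;
  fm   : fcar -> fcar;
  fmulA : forall x y z, fmul x (fmul y z) = fmul (fmul x y) z;
  fmul1l : forall x, fmul fone x = x;
  fmul1r : forall x, fmul x fone = x;
  finv_l : forall x, fmul (fmul x (finv x)) x = x;
  finv_r : forall x, fmul (fmul (finv x) x) (finv x) = finv x;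
  fidem_comm : forall e f, fmul e e = e -> fmul f f = f -> fmul e f = fmul f e;
  (* fm s lies in the sigma-class of s ... *)
  fm_sigma : forall s, exists e, fmul e e = e /\ fmul e (fm s) = fmul e s;
  (* ... and is the greatest element of it w.r.t. the natural partial order
     (t <= u iff t = e u for some idempotent e) *)
  fm_max : forall s t, (exists e, fmul e e = e /\ fmul e t = fmul e s) ->
                       exists e, fmul e e = e /\ t = fmul e (fm s)
}.

Inductive term (X : Type) : Type :=
  | TVar : X -> term X
  | TOne : term X
  | TMul : term X -> term X -> term X
  | TInv : term X -> term X
  | TM   : term X -> term X.
Arguments TOne {X}.

(* letters of X u X^{-1}: (x, false) = x, (x, true) = x^{-1} *)
Definition letter (X : Type) := (X * bool)%type.
Definition word (X : Type) := list (letter X).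

Definition letter_inv X (a : letter X) : letter X := (fst a, negb (snd a)).

Definition lterm X (a : letter X) : term X :=
  if snd a then TInv (TVar (fst a)) else TVar (fst a).

Fixpoint wterm X (u : word X) : term X :=
  match u with
  | [] => TOne
  | a :: u' => TMul (lterm a) (wterm u')
  end.

(* an element u0 v1^m u1 ... vn^m un of Im_X, given as (u0, [(v1,u1);...;(vn,un)]) *)
Definition imterm (X : Type) := (word X * list (word X * word X))%type.

Fixpoint imterm_aux X (u0 : word X) (l : list (word X * word X)) : term X :=
  match l with
  | [] => wterm u0
  | (v, u) :: l' => TMul (wterm u0) (TMul (TM (wterm v)) (imterm_aux u l'))
  end.

Definition imt X (w : imterm X) : term X := imterm_aux (fst w) (snd w).

Fixpoint eval {X : Type} {M : FInvMonoid} (phi : X -> M) (t : term X) : M :=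
  match t with
  | TVar x => phi x
  | TOne => fone M
  | TMul t1 t2 => fmul M (eval phi t1) (eval phi t2)
  | TInv t1 => finv M (eval phi t1)
  | TM t1 => fm M (eval phi t1)
  end.

(** * Equality in S = FInv<X | R>: the quotient of the free F-inverse monoid
    by the congruence generated by R, i.e. equality under every R-satisfying
    assignment into every F-inverse monoid. *)
Definition eqS X (R : imterm X -> imterm X -> Prop) (t1 t2 : term X) : Prop :=
  forall (M : FInvMonoid) (phi : X -> M),
    (forall p q, R p q -> eval phi (imt p) = eval phi (imt q)) ->
    eval phi t1 = eval phi t2.

(** * Equality in the greatest group image G = S / sigma:
    s sigma t iff e s = e t for some idempotent e of S. *)
Definition eqG X (R : imterm X -> imterm X -> Prop) (t1 t2 : term X) : Prop :=
  exists e : term X, eqS R (TMul e e) e /\ eqS R (TMul e t1) (TMul e t2).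

(** * Subgraphs of the Cayley graph Gamma_X of G.
    Vertices of G are represented by terms modulo eqG; the edge labelled
    a in X u X^{-1} starting at g is represented by (g, a) and ends at g a_G. *)
Record graph (X : Type) := {
  gV : term X -> Prop;
  gE : term X -> letter X -> Prop
}.

Definition is_subgraph X (R : imterm X -> imterm X -> Prop) (D : graph X) : Prop :=
  (forall g h, eqG R g h -> gV D g -> gV D h) /\
  (forall g h a, eqG R g h -> gE D g a -> gE D h a) /\
  (forall g a, gE D g a -> gV D g /\ gV D (TMul g (lterm a))) /\
  (forall g a, gE D g a -> gE D (TMul g (lterm a)) (letter_inv a)).

Definition subgraph_le X (D1 D2 : graph X) : Prop :=
  (forall g, gV D1 g -> gV D2 g) /\ (forall g a, gE D1 g a -> gE D2 g a).

Fixpoint path_in X (D : graph X) (h : term X) (u : word X) : Prop :=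
  match u with
  | [] => gV D h
  | a :: u' => gE D h a /\ path_in D (TMul h (lterm a)) u'
  end.

Fixpoint journey_paths X (D : graph X) (g : term X) (u0 : word X)
    (l : list (word X * word X)) : Prop :=
  match l with
  | [] => path_in D g u0
  | (v, u) :: l' =>
      path_in D g u0 /\ journey_paths D (TMul (TMul g (wterm u0)) (wterm v)) u l'
  end.

Definition labels_journey X (R : imterm X -> imterm X -> Prop) (D : graph X)
    (w : imterm X) (g h : term X) : Prop :=
  eqG R (TMul g (imt w)) h /\ journey_paths D g (fst w) (snd w).

Definition cQ_closed X (R : imterm X -> imterm X -> Prop)
    (Q : imterm X -> imterm X -> Prop) (D : graph X) : Prop :=
  forall u v, Q u v -> forall g h, gV D g -> gV D h ->
    (labels_journey R D u g h <-> labels_journey R D v g h).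

Definition cQ_closure X (R : imterm X -> imterm X -> Prop)
    (Q : imterm X -> imterm X -> Prop) (D : graph X) : graph X :=
  {| gV := fun g => forall D', is_subgraph R D' -> cQ_closed R Q D' ->
                      subgraph_le D D' -> gV D' g;
     gE := fun g a => forall D', is_subgraph R D' -> cQ_closed R Q D' ->
                      subgraph_le D D' -> gE D' g a |}.

Definition QS X (R : imterm X -> imterm X -> Prop) (u v : imterm X) : Prop :=
  eqS R (imt u) (imt v).

Definition same_graph X (D1 D2 : graph X) : Prop :=
  (forall g, gV D1 g <-> gV D2 g) /\ (forall g a, gE D1 g a <-> gE D2 g a).

(* Main.v *)
Require Import Defs.
From Stdlib Require Import List Setoid Morphisms Classical FunctionalExtensionality PropExtensionality ProofIrrelevance.
Import ListNotations.
Set Implicit Arguments.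

Lemma fidem_inv_l (M : FInvMonoid) (k : M) :
  fmul M (fmul M (finv M k) k) (fmul M (finv M k) k) = fmul M (finv M k) k.
Proof. rewrite fmulA. rewrite finv_r. reflexivity. Qed.

Lemma fidem_inv_r (M : FInvMonoid) (k : M) :
  fmul M (fmul M k (finv M k)) (fmul M k (finv M k)) = fmul M k (finv M k).
Proof. rewrite fmulA. rewrite finv_l. reflexivity. Qed.


Lemma eqS_refl X (R : imterm X -> imterm X -> Prop) t : eqS R t t.
Proof. intros M phi _; reflexivity. Qed.
Lemma eqS_eqG X (R : imterm X -> imterm X -> Prop) t1 t2 : eqS R t1 t2 -> eqG R t1 t2.
Proof.
  intro H. exists TOne. split.
  - intros M phi HR; simpl; apply fmul1l.
  - intros M phi HR; simpl; rewrite (H M phi HR); reflexivity.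
Qed.

Lemma eqG_refl X (R : imterm X -> imterm X -> Prop) t : eqG R t t.
Proof. apply eqS_eqG, eqS_refl. Qed.
Lemma eqG_sym X (R : imterm X -> imterm X -> Prop) t1 t2 : eqG R t1 t2 -> eqG R t2 t1.
Proof. intros [e [H1 H2]]. exists e. split; auto. intros M phi HR. symmetry; apply H2; auto. Qed.
Lemma eqG_trans X (R : imterm X -> imterm X -> Prop) t1 t2 t3 :
  eqG R t1 t2 -> eqG R t2 t3 -> eqG R t1 t3.
Proof.
  intros [e1 [I1 H1]] [e2 [I2 H2]]. exists (TMul e1 e2). split.
  - intros M phi HR. specialize (I1 M phi HR). specialize (I2 M phi HR). simpl in *.
    set (a := eval phi e1) in *. set (b := eval phi e2) in *.
    assert (C : fmul M a b = fmul M b a) by (apply fidem_comm; auto).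
    rewrite <- fmulA. rewrite (fmulA M b a b). rewrite <- C. rewrite <- fmulA.
    rewrite I2. rewrite fmulA. rewrite I1. reflexivity.
  - intros M phi HR. specialize (I1 M phi HR). specialize (I2 M phi HR).
    specialize (H1 M phi HR). specialize (H2 M phi HR). simpl in *.
    set (a := eval phi e1) in *. set (b := eval phi e2) in *.
    assert (C : fmul M a b = fmul M b a) by (apply fidem_comm; auto).
    rewrite C. rewrite <- !fmulA. rewrite H1. rewrite !fmulA. rewrite <- C.
    rewrite <- !fmulA. rewrite H2. reflexivity.
Qed.

Lemma eqG_mulr X (R : imterm X -> imterm X -> Prop) s t k :
  eqG R s t -> eqG R (TMul s k) (TMul t k).
Proof.
  intros [e [I H]]. exists e. split; auto. intros M phi HR. simpl.
  rewrite !fmulA. specialize (H M phi HR). simpl in H. rewrite H. reflexivity.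
Qed.

Lemma conj_lemma (M : FInvMonoid) (g a z : M) : fmul M a a = a ->
  fmul M (fmul M (fmul M g a) (finv M g)) (fmul M g z) = fmul M g (fmul M a z).
Proof.
  intro I.
  assert (C : fmul M a (fmul M (finv M g) g) = fmul M (fmul M (finv M g) g) a)
    by (apply fidem_comm; auto using fidem_inv_l).
  rewrite <- !fmulA. rewrite (fmulA M (finv M g) g z). rewrite (fmulA M a (fmul M (finv M g) g) z).
  rewrite C. rewrite <- (fmulA M (fmul M (finv M g) g) a z). rewrite (fmulA M g (fmul M (finv M g) g)).
  rewrite (fmulA M g (finv M g) g). rewrite finv_l. reflexivity.
Qed.

Lemma eqG_mull X (R : imterm X -> imterm X -> Prop) s t k :
  eqG R s t -> eqG R (TMul k s) (TMul k t).
Proof.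
  intros [e [I H]]. exists (TMul (TMul k e) (TInv k)). split.
  - intros M phi HR. specialize (I M phi HR). simpl in *.
    transitivity (fmul M (fmul M (fmul M (eval phi k) (eval phi e)) (finv M (eval phi k)))
       (fmul M (eval phi k) (fmul M (eval phi e) (finv M (eval phi k))))).
    { f_equal. symmetry. apply fmulA. }
    rewrite conj_lemma by auto. rewrite (fmulA M (eval phi e) (eval phi e)), I, fmulA. reflexivity.
  - intros M phi HR. specialize (I M phi HR). specialize (H M phi HR). simpl in *.
    rewrite !conj_lemma by auto. rewrite H. reflexivity.
Qed.

Lemma eqG_assoc X (R : imterm X -> imterm X -> Prop) a b c :
  eqG R (TMul (TMul a b) c) (TMul a (TMul b c)).
Proof. apply eqS_eqG. intros M phi HR; simpl; symmetry; apply fmulA. Qed.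
Lemma eqG_1l X (R : imterm X -> imterm X -> Prop) a : eqG R (TMul TOne a) a.
Proof. apply eqS_eqG. intros M phi HR; simpl; apply fmul1l. Qed.
Lemma eqG_1r X (R : imterm X -> imterm X -> Prop) a : eqG R (TMul a TOne) a.
Proof. apply eqS_eqG. intros M phi HR; simpl; apply fmul1r. Qed.
Lemma eqG_invr X (R : imterm X -> imterm X -> Prop) a : eqG R (TMul a (TInv a)) TOne.
Proof.
  exists (TMul a (TInv a)). split; intros M phi HR; simpl.
  - apply fidem_inv_r.
  - rewrite fmul1r. apply fidem_inv_r.
Qed.
Lemma eqG_invl X (R : imterm X -> imterm X -> Prop) a : eqG R (TMul (TInv a) a) TOne.
Proof.
  exists (TMul (TInv a) a). split; intros M phi HR; simpl.
  - apply fidem_inv_l.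
  - rewrite fmul1r. apply fidem_inv_l.
Qed.

Add Parametric Relation X (R : imterm X -> imterm X -> Prop) : (term X) (eqG R)
  reflexivity proved by (@eqG_refl X R)
  symmetry proved by (@eqG_sym X R)
  transitivity proved by (@eqG_trans X R) as eqG_rel.

Add Parametric Morphism X (R : imterm X -> imterm X -> Prop) : (@TMul X)
  with signature (eqG R) ==> (eqG R) ==> (eqG R) as TMul_mor.
Proof. intros a b H c d H'. transitivity (TMul b c). apply eqG_mulr; auto. apply eqG_mull; auto. Qed.

Lemma eqG_inv_uniq X (R : imterm X -> imterm X -> Prop) a b :
  eqG R (TMul a b) TOne -> eqG R b (TInv a).
Proof.
  intro H. rewrite <- (eqG_1l R b). rewrite <- (eqG_invl R a). rewrite eqG_assoc.
  rewrite H. apply eqG_1r.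
Qed.

Add Parametric Morphism X (R : imterm X -> imterm X -> Prop) : (@TInv X)
  with signature (eqG R) ==> (eqG R) as TInv_mor.
Proof. intros a b H. apply eqG_inv_uniq. rewrite <- H. apply eqG_invr. Qed.

Lemma eqG_cancel_l X (R : imterm X -> imterm X -> Prop) g a b :
  eqG R (TMul g a) (TMul g b) -> eqG R a b.
Proof.
  intro H. rewrite <- (eqG_1l R a), <- (eqG_1l R b), <- (eqG_invl R g), !eqG_assoc, H.
  reflexivity.
Qed.

Lemma graph_ext X (A B : graph X) : same_graph A B -> A = B.
Proof.
  destruct A as [VA EA], B as [VB EB]. intros [H1 H2]; simpl in *.
  assert (VA = VB) by (extensionality g; apply propositional_extensionality; auto).
  assert (EA = EB) by (extensionality g; extensionality a; apply propositional_extensionality; auto).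
  subst; reflexivity.
Qed.

Lemma le_antisym X (A B : graph X) : subgraph_le A B -> subgraph_le B A -> A = B.
Proof. intros [H1 H2] [H3 H4]. apply graph_ext; split; split; auto. Qed.

Lemma le_refl X (A : graph X) : subgraph_le A A.
Proof. split; auto. Qed.
Lemma le_trans X (A B C : graph X) : subgraph_le A B -> subgraph_le B C -> subgraph_le A C.
Proof. intros [H1 H2] [H3 H4]; split; auto. Qed.

Lemma path_mono X (D1 D2 : graph X) g u : subgraph_le D1 D2 -> path_in D1 g u -> path_in D2 g u.
Proof.
  intros [HV HE]. revert g; induction u as [|a u IH]; simpl; intros g H; auto.
  destruct H; split; auto.
Qed.

Lemma journey_mono X (D1 D2 : graph X) l g u0 :
  subgraph_le D1 D2 -> journey_paths D1 g u0 l -> journey_paths D2 g u0 l.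
Proof.
  intro Hle. revert g u0; induction l as [|[v u] l IH]; simpl; intros g u0 H.
  - eapply path_mono; eauto.
  - destruct H; split; [eapply path_mono; eauto | auto].
Qed.

Lemma path_E X (R : imterm X -> imterm X -> Prop) (D : graph X) g g' u :
  is_subgraph R D -> eqG R g g' -> path_in D g u -> path_in D g' u.
Proof.
  intros [S1 [S2 [S3 S4]]]. revert g g'; induction u as [|a u IH]; simpl; intros g g' Hg H.
  - eauto.
  - destruct H as [H1 H2]. split; eauto. apply IH with (TMul g (lterm a)); auto.
    rewrite Hg; reflexivity.
Qed.

Lemma journey_E X (R : imterm X -> imterm X -> Prop) (D : graph X) l g g' u0 :
  is_subgraph R D -> eqG R g g' -> journey_paths D g u0 l -> journey_paths D g' u0 l.
Proof.
  intros HS. revert g g' u0; induction l as [|[v u] l IH]; simpl; intros g g' u0 Hg H.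
  - eapply path_E; eauto.
  - destruct H as [H1 H2]. split; [eapply path_E; eauto|].
    eapply IH; [|exact H2]. rewrite Hg; reflexivity.
Qed.

Lemma path_start X (R : imterm X -> imterm X -> Prop) (D : graph X) g u :
  is_subgraph R D -> path_in D g u -> gV D g.
Proof.
  intros [S1 [S2 [S3 S4]]]. destruct u; simpl; auto. intros [H _]. apply (S3 _ _ H).
Qed.

Lemma journey_start X (R : imterm X -> imterm X -> Prop) (D : graph X) l g u0 :
  is_subgraph R D -> journey_paths D g u0 l -> gV D g.
Proof.
  intros HS. destruct l as [|[v u] l]; simpl; intros H.
  - eapply path_start; eauto.
  - eapply path_start; eauto. apply H.
Qed.

Lemma path_end X (R : imterm X -> imterm X -> Prop) (D : graph X) g u :
  is_subgraph R D -> path_in D g u -> gV D (TMul g (wterm u)).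
Proof.
  intros HS. pose proof HS as [S1 [S2 [S3 S4]]].
  revert g; induction u as [|a u IH]; simpl; intros g H.
  - apply S1 with g; auto. symmetry; apply eqG_1r.
  - destruct H as [H1 H2]. apply S1 with (TMul (TMul g (lterm a)) (wterm u)); auto.
    apply eqG_assoc.
Qed.

Definition cs X (R : imterm X -> imterm X -> Prop) (D : graph X) :=
  is_subgraph R D /\ cQ_closed R R D.
Definition cl X (R : imterm X -> imterm X -> Prop) (A : graph X) := cQ_closure R R A.

Lemma cl_ext X (R : imterm X -> imterm X -> Prop) A : subgraph_le A (cl R A).
Proof. split; simpl.
  - intros g H D' S C [L1 L2]; auto.
  - intros g a H D' S C [L1 L2]; auto.
Qed.

Lemma cl_min X (R : imterm X -> imterm X -> Prop) A D :
  cs R D -> subgraph_le A D -> subgraph_le (cl R A) D.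
Proof. intros [H1 H2] H3; split; simpl; intros; auto. Qed.

Lemma cl_sub X (R : imterm X -> imterm X -> Prop) A : is_subgraph R (cl R A).
Proof.
  split; [|split; [|split]]; simpl.
  - intros g h Hgh Hg D' S C L. pose proof S as [S1 _]. eapply S1; eauto.
  - intros g h a Hgh Hg D' S C L. pose proof S as [_ [S2 _]]. eapply S2; eauto.
  - intros g a H; split; intros D' S C L; pose proof (H D' S C L) as HE;
      destruct S as [_ [_ [S3 _]]]; apply (S3 _ _ HE).
  - intros g a H D' S C L. pose proof S as [S1 [S2 [S3 S4]]]. apply S4. apply H; auto.
Qed.

Lemma path_cl X (R : imterm X -> imterm X -> Prop) A g u :
  (forall D', is_subgraph R D' -> cQ_closed R R D' -> subgraph_le A D' -> path_in D' g u) ->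
  path_in (cl R A) g u.
Proof.
  revert g; induction u as [|a u IH]; simpl; intros g H.
  - intros D' S C L; apply H; auto.
  - split.
    + intros D' S C L; apply (H D' S C L).
    + apply IH. intros D' S C L; apply (H D' S C L).
Qed.

Lemma journey_cl X (R : imterm X -> imterm X -> Prop) A l g u0 :
  (forall D', is_subgraph R D' -> cQ_closed R R D' -> subgraph_le A D' -> journey_paths D' g u0 l) ->
  journey_paths (cl R A) g u0 l.
Proof.
  revert g u0; induction l as [|[v u] l IH]; simpl; intros g u0 H.
  - apply path_cl; auto.
  - split.
    + apply path_cl. intros D' S C L; apply (H D' S C L).
    + apply IH. intros D' S C L; apply (H D' S C L).
Qed.

Lemma R_eqS X (R : imterm X -> imterm X -> Prop) u v : R u v -> eqS R (imt u) (imt v).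
Proof. intros H M phi HR. apply HR; auto. Qed.

Lemma cl_closed X (R : imterm X -> imterm X -> Prop) (Rsym : forall u v, R u v -> R v u) A :
  cQ_closed R R (cl R A).
Proof.
  assert (K : forall u v, R u v -> forall g h, gV (cl R A) g -> gV (cl R A) h ->
     labels_journey R (cl R A) u g h -> labels_journey R (cl R A) v g h).
  { intros u v Ruv g h Hg Hh [E1 J1]. split.
    - rewrite <- E1. apply eqG_mull. apply eqS_eqG. apply R_eqS. auto.
    - apply journey_cl. intros D' S C L.
      assert (Le : subgraph_le (cl R A) D') by (apply cl_min; [split|]; auto).
      destruct Le as [LV LE].
      assert (LJ : labels_journey R D' u g h).
      { split; [exact E1 | apply journey_mono with (cl R A); [split; auto | exact J1]]. }
      apply (C u v Ruv g h (LV _ Hg) (LV _ Hh)) in LJ. apply LJ. }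
  intros u v Ruv g h Hg Hh. split; apply K; auto.
Qed.

Lemma cl_cs X (R : imterm X -> imterm X -> Prop) (Rsym : forall u v, R u v -> R v u) A :
  cs R (cl R A).
Proof. split. apply cl_sub. apply cl_closed; auto. Qed.

Definition trI X (g : term X) (D : graph X) : graph X :=
  {| gV := fun k => gV D (TMul g k); gE := fun k a => gE D (TMul g k) a |}.

Lemma trI_sub X (R : imterm X -> imterm X -> Prop) g D : is_subgraph R D -> is_subgraph R (trI g D).
Proof.
  intros [S1 [S2 [S3 S4]]]. split; [|split; [|split]]; simpl.
  - intros k h H Hk. eapply S1; [|exact Hk]. rewrite H; reflexivity.
  - intros k h a H Hk. eapply S2; [|exact Hk]. rewrite H; reflexivity.
  - intros k a H. destruct (S3 _ _ H) as [H1 H2]. split; auto.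
    eapply S1; [|exact H2]. apply eqG_assoc.
  - intros k a H. eapply S2; [|exact (S4 _ _ H)]. apply eqG_assoc.
Qed.

Lemma path_trI X (R : imterm X -> imterm X -> Prop) g D u k :
  is_subgraph R D -> (path_in (trI g D) k u <-> path_in D (TMul g k) u).
Proof.
  intros HS. revert k; induction u as [|a u IH]; simpl; intros k; [tauto|].
  rewrite IH. split; intros [H1 H2]; split; auto; eapply path_E; eauto.
  - symmetry; apply eqG_assoc.
  - apply eqG_assoc.
Qed.

Lemma journey_trI X (R : imterm X -> imterm X -> Prop) g D l k u0 :
  is_subgraph R D -> (journey_paths (trI g D) k u0 l <-> journey_paths D (TMul g k) u0 l).
Proof.
  intros HS. revert k u0; induction l as [|[v u] l IH]; simpl; intros k u0.
  - apply (path_trI (R:=R)); auto.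
  - rewrite (path_trI (R:=R) g) by auto. rewrite IH. split; intros [H1 H2]; split; auto; eapply journey_E; eauto.
    + rewrite !(eqG_assoc R); reflexivity.
    + rewrite !(eqG_assoc R); reflexivity.
Qed.

Lemma LJ_trI X (R : imterm X -> imterm X -> Prop) g D w k h :
  is_subgraph R D -> (labels_journey R (trI g D) w k h <-> labels_journey R D w (TMul g k) (TMul g h)).
Proof.
  intros HS. unfold labels_journey. rewrite (journey_trI (R:=R) g) by auto.
  split; intros [H1 H2]; split; auto.
  - rewrite (eqG_assoc R). apply eqG_mull; auto.
  - apply eqG_cancel_l with g. rewrite <- (eqG_assoc R). auto.
Qed.

Lemma trI_cs X (R : imterm X -> imterm X -> Prop) g D : cs R D -> cs R (trI g D).
Proof.
  intros [S C]. split. apply trI_sub; auto.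
  intros u v Ruv k h Hk Hh. rewrite !(LJ_trI (R:=R) g) by auto. apply C; auto.
Qed.

Definition Fit X (g : term X) (K D : graph X) := subgraph_le K (trI g D).

Lemma Fit_cl X (R : imterm X -> imterm X -> Prop) g A D :
  cs R D -> (Fit g (cl R A) D <-> Fit g A D).
Proof.
  intros HD. unfold Fit. split; intro H.
  - eapply le_trans; [apply cl_ext|exact H].
  - apply cl_min; auto. apply trI_cs; auto.
Qed.

Definition un X (A B : graph X) : graph X :=
  {| gV := fun k => gV A k \/ gV B k; gE := fun k a => gE A k a \/ gE B k a |}.

Lemma Fit_un X (g : term X) A B D : Fit g (un A B) D <-> Fit g A D /\ Fit g B D.
Proof.
  unfold Fit; split.
  - intros [H1 H2]; split; split; simpl in *; auto.
  - intros [[H1 H2] [H3 H4]]; split; simpl; [intros ? H|intros ? ? H]; destruct H; [apply H1|apply H3|apply H2|apply H4]; auto.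
Qed.

Lemma Fit_E X (R : imterm X -> imterm X -> Prop) g g' K D :
  is_subgraph R D -> eqG R g g' -> Fit g K D -> Fit g' K D.
Proof.
  intros [S1 [S2 _]] He [H1 H2]; split; simpl in *; intros.
  - eapply S1; [|apply H1; eauto]. rewrite He; reflexivity.
  - eapply S2; [|apply H2; eauto]. rewrite He; reflexivity.
Qed.

Lemma Fit_one X (R : imterm X -> imterm X -> Prop) K D :
  is_subgraph R D -> (Fit TOne K D <-> subgraph_le K D).
Proof.
  intros [S1 [S2 _]]; split; intros [H1 H2]; split; simpl in *; intros.
  - eapply S1; [|apply H1; eauto]. apply eqG_1l.
  - eapply S2; [|apply H2; eauto]. apply eqG_1l.
  - eapply S1; [|apply H1; eauto]. symmetry; apply eqG_1l.
  - eapply S2; [|apply H2; eauto]. symmetry; apply eqG_1l.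
Qed.

Definition trc X (R : imterm X -> imterm X -> Prop) (P : term X -> Prop) (B : graph X) : graph X :=
  {| gV := fun k => exists h m, P h /\ gV B m /\ eqG R (TMul h m) k;
     gE := fun k a => exists h m, P h /\ gE B m a /\ eqG R (TMul h m) k |}.

Lemma Fit_trc X (R : imterm X -> imterm X -> Prop) g h P B D :
  is_subgraph R D -> P = eqG R h -> (Fit g (trc R P B) D <-> Fit (TMul g h) B D).
Proof.
  intros [S1 [S2 _]] HP. subst P. unfold Fit. split; intros [H1 H2]; split; simpl in *; intros.
  - eapply S1; [|apply H1; exists h, g0; repeat split; auto; reflexivity]. symmetry; apply eqG_assoc.
  - eapply S2; [|apply H2; exists h, g0; repeat split; auto; reflexivity]. symmetry; apply eqG_assoc.
  - destruct H as [h' [m [Hh [Hm He]]]]. eapply S1; [|apply H1; eauto].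
    rewrite <- He, <- Hh. apply eqG_assoc.
  - destruct H as [h' [m [Hh [Hm He]]]]. eapply S2; [|apply H2; eauto].
    rewrite <- He, <- Hh. apply eqG_assoc.
Qed.

Definition ptv X (P : term X -> Prop) : graph X :=
  {| gV := P; gE := fun _ _ => False |}.

Lemma Fit_ptv X (R : imterm X -> imterm X -> Prop) g h D :
  is_subgraph R D -> (Fit g (ptv (eqG R h)) D <-> gV D (TMul g h)).
Proof.
  intros [S1 [S2 _]]. unfold Fit. split.
  - intros [H1 H2]. apply H1. simpl. reflexivity.
  - intros H. split; simpl; intros; [|tauto]. eapply S1; [|exact H]. rewrite H0; reflexivity.
Qed.

Definition Ex X (R : imterm X -> imterm X -> Prop) (x : X) : graph X :=
  {| gV := fun k => eqG R TOne k \/ eqG R (TVar x) k;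
     gE := fun k a => (a = (x, false) /\ eqG R k TOne) \/ (a = (x, true) /\ eqG R k (TVar x)) |}.

Lemma Fit_Ex X (R : imterm X -> imterm X -> Prop) g x D :
  is_subgraph R D -> (Fit g (Ex R x) D <-> gE D g (x, false)).
Proof.
  intros [S1 [S2 [S3 S4]]]. unfold Fit. split.
  - intros [H1 H2]. simpl in H2. eapply S2; [|apply H2; left; split; [reflexivity|reflexivity]].
    apply eqG_1r.
  - intros H. destruct (S3 _ _ H) as [V1 V2]. pose proof (S4 _ _ H) as E2. simpl in *.
    split; simpl; intros.
    + destruct H0 as [H0|H0].
      * eapply S1; [|exact V1]. rewrite <- H0. symmetry; apply eqG_1r.
      * eapply S1; [|exact V2]. rewrite <- H0. reflexivity.
    + destruct H0 as [[-> H0]|[-> H0]].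
      * eapply S2; [|exact H]. rewrite H0. symmetry; apply eqG_1r.
      * eapply S2; [|exact E2]. rewrite H0. reflexivity.
Qed.

Lemma cs_eq X (R : imterm X -> imterm X -> Prop) K1 K2 :
  cs R K1 -> cs R K2 -> (forall D, cs R D -> (Fit TOne K1 D <-> Fit TOne K2 D)) -> K1 = K2.
Proof.
  intros C1 C2 H. apply le_antisym.
  - apply (Fit_one (R:=R)); [apply C2|]. apply H; auto. apply (Fit_one (R:=R)); [apply C2|]. apply le_refl.
  - apply (Fit_one (R:=R)); [apply C1|]. apply H; auto. apply (Fit_one (R:=R)); [apply C1|]. apply le_refl.
Qed.

Definition okE X (R : imterm X -> imterm X -> Prop) (A : graph X) (P : term X -> Prop) :=
  cs R A /\ gV A TOne /\ exists k, P = eqG R k /\ gV A k.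

Record elt X (R : imterm X -> imterm X -> Prop) := mkE { eA : graph X; eg : term X -> Prop; eok : okE R eA eg }.
Arguments mkE {X R}.

Lemma elt_eq X (R : imterm X -> imterm X -> Prop) (a b : elt R) : eA a = eA b -> eg a = eg b -> a = b.
Proof.
  destruct a as [A P o], b as [B Q o']; simpl; intros -> ->. f_equal. apply proof_irrelevance.
Qed.

Lemma eqG_fun X (R : imterm X -> imterm X -> Prop) k k' : eqG R k k' -> eqG R k = eqG R k'.
Proof.
  intro H. extensionality z. apply propositional_extensionality. split; intro H'.
  - rewrite <- H; auto.
  - rewrite H; auto.
Qed.

Definition rep X (R : imterm X -> imterm X -> Prop) (a : elt R) k := eg a = eqG R k.

Lemma rep_ex X (R : imterm X -> imterm X -> Prop) (a : elt R) : exists k, rep a k.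
Proof. destruct (eok a) as [_ [_ [k [Hk _]]]]. exists k; auto. Qed.

Lemma rep_E X (R : imterm X -> imterm X -> Prop) (a : elt R) k k' : rep a k -> eqG R k k' -> rep a k'.
Proof. unfold rep; intros H1 H. rewrite H1. apply eqG_fun; auto. Qed.

Lemma rep_uniq X (R : imterm X -> imterm X -> Prop) (a : elt R) k k' : rep a k -> rep a k' -> eqG R k k'.
Proof. unfold rep; intros H1 H2. assert (H : eqG R k k) by reflexivity.
  change ((fun z => eqG R k z) k') . rewrite <- H1, H2. reflexivity. Qed.

Lemma rep_cs X (R : imterm X -> imterm X -> Prop) (a : elt R) : cs R (eA a).
Proof. destruct (eok a) as [C _]; auto. Qed.

Lemma rep_1 X (R : imterm X -> imterm X -> Prop) (a : elt R) : gV (eA a) TOne.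
Proof. destruct (eok a) as [_ [H _]]; auto. Qed.

Lemma rep_V X (R : imterm X -> imterm X -> Prop) (a : elt R) k : rep a k -> gV (eA a) k.
Proof.
  destruct (eok a) as [[[S1 _] _] [_ [k0 [Hk0 V0]]]]. unfold rep; intros H.
  rewrite Hk0 in H. apply S1 with k0; auto. rewrite H. reflexivity.
Qed.


Definition one_ok X (R : imterm X -> imterm X -> Prop) (Rsym : forall u v, R u v -> R v u) :
  okE R (cl R (ptv (eqG R TOne))) (eqG R TOne).
Proof.
  split; [apply cl_cs; auto|]. split.
  - apply cl_ext. simpl. reflexivity.
  - exists TOne; split; auto. apply cl_ext. simpl. reflexivity.
Qed.
Definition one X R Rsym : elt R := mkE _ _ (@one_ok X R Rsym).

Definition mulP X (R : imterm X -> imterm X -> Prop) (a b : elt R) : term X -> Prop :=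
  fun k => exists g h, eg a g /\ eg b h /\ eqG R (TMul g h) k.

Lemma mulP_rep X (R : imterm X -> imterm X -> Prop) (a b : elt R) ka kb :
  rep a ka -> rep b kb -> mulP a b = eqG R (TMul ka kb).
Proof.
  unfold rep, mulP; intros Ha Hb. rewrite Ha, Hb. extensionality z.
  apply propositional_extensionality. split.
  - intros [g [h [H1 [H2 H3]]]]. rewrite H1, H2. auto.
  - intros H. exists ka, kb. repeat split; auto; reflexivity.
Qed.

Definition mul_ok X (R : imterm X -> imterm X -> Prop) (Rsym : forall u v, R u v -> R v u) (a b : elt R) :
  okE R (cl R (un (eA a) (trc R (eg a) (eA b)))) (mulP a b).
Proof.
  destruct (rep_ex a) as [ka Ha]. destruct (rep_ex b) as [kb Hb].
  split; [apply cl_cs; auto|]. split.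
  - apply cl_ext. simpl. left. apply rep_1.
  - exists (TMul ka kb); split; [apply mulP_rep; auto|]. apply cl_ext. simpl. right.
    exists ka, kb. split; [rewrite Ha; reflexivity|]. split; [apply rep_V; auto|reflexivity].
Qed.
Definition mul X R Rsym (a b : elt R) : elt R := mkE _ _ (@mul_ok X R Rsym a b).

Definition invP X (R : imterm X -> imterm X -> Prop) (a : elt R) : term X -> Prop :=
  fun k => exists g, eg a g /\ eqG R (TInv g) k.

Lemma invP_rep X (R : imterm X -> imterm X -> Prop) (a : elt R) ka :
  rep a ka -> invP a = eqG R (TInv ka).
Proof.
  unfold rep, invP; intros Ha. rewrite Ha. extensionality z.
  apply propositional_extensionality. split.
  - intros [g [H1 H3]]. rewrite H1. auto.
  - intros H. exists ka. split; auto; reflexivity.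
Qed.

Definition inv_ok X (R : imterm X -> imterm X -> Prop) (Rsym : forall u v, R u v -> R v u) (a : elt R) :
  okE R (cl R (trc R (invP a) (eA a))) (invP a).
Proof.
  destruct (rep_ex a) as [ka Ha].
  split; [apply cl_cs; auto|]. split.
  - apply cl_ext. simpl. exists (TInv ka), ka. rewrite (invP_rep Ha).
    split; [reflexivity|]. split; [apply rep_V; auto|apply eqG_invl].
  - exists (TInv ka); split; [apply invP_rep; auto|]. apply cl_ext. simpl.
    exists (TInv ka), TOne. rewrite (invP_rep Ha).
    split; [reflexivity|]. split; [apply rep_1|apply eqG_1r].
Qed.
Definition inv X R Rsym (a : elt R) : elt R := mkE _ _ (@inv_ok X R Rsym a).

Definition fm_ok X (R : imterm X -> imterm X -> Prop) (Rsym : forall u v, R u v -> R v u) (a : elt R) :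
  okE R (cl R (un (ptv (eqG R TOne)) (ptv (eg a)))) (eg a).
Proof.
  destruct (rep_ex a) as [ka Ha].
  split; [apply cl_cs; auto|]. split.
  - apply cl_ext. simpl. left. reflexivity.
  - exists ka; split; auto. apply cl_ext. simpl. right. rewrite Ha. reflexivity.
Qed.
Definition fmE X R Rsym (a : elt R) : elt R := mkE _ _ (@fm_ok X R Rsym a).
Arguments one {X R} Rsym.
Arguments mul {X R} Rsym a b.
Arguments inv {X R} Rsym a.
Arguments fmE {X R} Rsym a.

Lemma VE X (R : imterm X -> imterm X -> Prop) D g g' : is_subgraph R D -> eqG R g g' -> gV D g -> gV D g'.
Proof. intros [S1 _] H. apply S1; auto. Qed.

Lemma FitE_iff X (R : imterm X -> imterm X -> Prop) g g' K D :
  is_subgraph R D -> eqG R g g' -> (Fit g K D <-> Fit g' K D).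
Proof. intros S H; split; apply Fit_E with R; auto. symmetry; auto. Qed.

Lemma Fit_mulE X (R : imterm X -> imterm X -> Prop) (Rsym : forall u v, R u v -> R v u) (a b : elt R) ka g (D : graph X) :
  cs R D -> rep a ka -> (Fit g (eA (mul Rsym a b)) D <-> Fit g (eA a) D /\ Fit (TMul g ka) (eA b) D).
Proof.
  intros HD Ha. simpl. rewrite (Fit_cl g _ HD), Fit_un. rewrite (Fit_trc g (P:=eg a) (eA b) (proj1 HD) Ha).
  tauto.
Qed.

Lemma Fit_invE X (R : imterm X -> imterm X -> Prop) (Rsym : forall u v, R u v -> R v u) (a : elt R) ka g (D : graph X) :
  cs R D -> rep a ka -> (Fit g (eA (inv Rsym a)) D <-> Fit (TMul g (TInv ka)) (eA a) D).
Proof.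
  intros HD Ha. simpl. rewrite (Fit_cl g _ HD). apply (Fit_trc g (eA a) (proj1 HD)). apply invP_rep; auto.
Qed.

Lemma Fit_fmE X (R : imterm X -> imterm X -> Prop) (Rsym : forall u v, R u v -> R v u) (a : elt R) ka g (D : graph X) :
  cs R D -> rep a ka -> (Fit g (eA (fmE Rsym a)) D <-> gV D g /\ gV D (TMul g ka)).
Proof.
  intros HD Ha. simpl. rewrite (Fit_cl g _ HD), Fit_un. unfold rep in Ha. rewrite Ha.
  rewrite !(Fit_ptv g _ (proj1 HD)). split; intros [H1 H2]; split; auto.
  - apply VE with R (TMul g TOne); [apply HD|apply eqG_1r|exact H1].
  - apply VE with R g; [apply HD|symmetry; apply eqG_1r|exact H1].
Qed.

Lemma Fit_oneE X (R : imterm X -> imterm X -> Prop) (Rsym : forall u v, R u v -> R v u) g (D : graph X) :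
  cs R D -> (Fit g (eA (one Rsym)) D <-> gV D g).
Proof.
  intros HD. simpl. rewrite (Fit_cl g _ HD), (Fit_ptv g _ (proj1 HD)). split; intro H;
  (eapply VE; [apply HD| |exact H]); [apply eqG_1r|symmetry; apply eqG_1r].
Qed.

Lemma Fit_el X (R : imterm X -> imterm X -> Prop) (a : elt R) ka g (D : graph X) :
  cs R D -> rep a ka -> Fit g (eA a) D -> gV D g /\ gV D (TMul g ka).
Proof.
  intros HD Ha [H1 _]. split.
  - eapply VE; [apply HD| |apply H1, rep_1]. apply eqG_1r.
  - apply H1. apply rep_V; auto.
Qed.

Lemma elt_eq_fit X (R : imterm X -> imterm X -> Prop) (a b : elt R) k :
  rep a k -> rep b k -> (forall D : graph X, cs R D -> (Fit TOne (eA a) D <-> Fit TOne (eA b) D)) -> a = b.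
Proof.
  intros Ha Hb H. apply elt_eq.
  - apply cs_eq with R; auto using rep_cs.
  - unfold rep in *. rewrite Ha, Hb; reflexivity.
Qed.

Lemma rep_mul X (R : imterm X -> imterm X -> Prop) (Rsym : forall u v, R u v -> R v u) (a b : elt R) (ka kb : term X) : rep a ka -> rep b kb -> rep (mul Rsym a b) (TMul ka kb).
Proof. intros; unfold rep; simpl; apply mulP_rep; auto. Qed.
Lemma rep_inv X (R : imterm X -> imterm X -> Prop) (Rsym : forall u v, R u v -> R v u) (a : elt R) (ka : term X) : rep a ka -> rep (inv Rsym a) (TInv ka).
Proof. intros; unfold rep; simpl; apply invP_rep; auto. Qed.
Lemma rep_fm X (R : imterm X -> imterm X -> Prop) (Rsym : forall u v, R u v -> R v u) (a : elt R) (ka : term X) : rep a ka -> rep (fmE Rsym a) ka.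
Proof. intros; unfold rep; simpl; auto. Qed.
Lemma rep_one X (R : imterm X -> imterm X -> Prop) (Rsym : forall u v, R u v -> R v u) : rep (one Rsym) (@TOne X).
Proof. unfold rep; simpl; auto. Qed.

Ltac grp := repeat first [rewrite eqG_1l | rewrite eqG_1r | rewrite eqG_invr | rewrite eqG_invl | reflexivity].

Lemma eqG_invr' X (R : imterm X -> imterm X -> Prop) a b : eqG R (TMul a (TMul (TInv a) b)) b.
Proof. rewrite <- eqG_assoc, eqG_invr, eqG_1l. reflexivity. Qed.
Lemma eqG_invl' X (R : imterm X -> imterm X -> Prop) a b : eqG R (TMul (TInv a) (TMul a b)) b.
Proof. rewrite <- eqG_assoc, eqG_invl, eqG_1l. reflexivity. Qed.

Ltac gsolve := repeat (rewrite ?eqG_assoc, ?eqG_1l, ?eqG_1r, ?eqG_invr', ?eqG_invl', ?eqG_invr, ?eqG_invl;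
   repeat match goal with H : eqG _ _ TOne |- _ => progress rewrite H end); reflexivity.

Ltac elfacts := repeat match goal with
  | H : Fit ?g (eA ?a) ?D, HD : cs _ ?D, Ha : rep ?a ?ka |- _ =>
      let H1 := fresh in let H2 := fresh in
      destruct (Fit_el HD Ha H) as [H1 H2]; revert H; revert H1 H2 end; intros.

Ltac vfin := match goal with
  | HD : cs ?RR ?D, H : gV ?D ?h |- gV ?D ?g => apply (VE (R:=RR) (g:=h)); [apply (proj1 HD)|gsolve|exact H]
  end.

Ltac fit1 := repeat match goal with
 | |- context [Fit ?g ?K ?D] =>
      tryif constr_eq g (@TOne _) then fail else
      (let H := fresh in assert (H : Fit g K D <-> Fit TOne K D)
          by (match goal with HH : cs ?RR D |- _ => apply (FitE_iff (R:=RR)); [apply (proj1 HH)|gsolve] end);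
       rewrite H; clear H) end.

Ltac fitE0 := repeat match goal with
 | |- context [Fit ?g ?K ?D] => match goal with |- context [Fit ?g' K D] =>
      tryif constr_eq g g' then fail else
      (let H := fresh in assert (H : Fit g K D <-> Fit g' K D)
          by (match goal with HH : cs ?RR D |- _ => apply (FitE_iff (R:=RR)); [apply (proj1 HH)|gsolve] end);
       rewrite H; clear H) end end.

Ltac fitE := fit1; fitE0.

Lemma inv_uniq (M : FInvMonoid) (x y : M) :
  fmul M (fmul M x y) x = x -> fmul M (fmul M y x) y = y -> y = finv M x.
Proof.
  intros H1 H2.
  assert (Iyx : fmul M (fmul M y x) (fmul M y x) = fmul M y x).
  { rewrite fmulA. rewrite H2. reflexivity. }
  assert (Ixy : fmul M (fmul M x y) (fmul M x y) = fmul M x y).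
  { rewrite fmulA. rewrite H1. reflexivity. }
  pose proof (fidem_inv_l M x) as Il. pose proof (fidem_inv_r M x) as Ir.
  assert (A : fmul M (fmul M (finv M x) x) y = y).
  { transitivity (fmul M (fmul M (finv M x) x) (fmul M (fmul M y x) y)); [rewrite H2; reflexivity|].
    transitivity (fmul M (fmul M (fmul M y x) (fmul M (finv M x) x)) y).
    { rewrite (fidem_comm M Iyx Il). rewrite <- !fmulA. reflexivity. }
    rewrite <- !fmulA. rewrite (fmulA M x (finv M x) (fmul M x y)), (fmulA M (fmul M x (finv M x)) x y), finv_l.
    rewrite fmulA. exact H2. }
  assert (H2' : fmul M y (fmul M x y) = y) by (rewrite fmulA; exact H2).
  assert (B : fmul M y (fmul M x (finv M x)) = y).
  { transitivity (fmul M (fmul M y (fmul M x y)) (fmul M x (finv M x))); [rewrite H2'; reflexivity|].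
    transitivity (fmul M y (fmul M (fmul M x (finv M x)) (fmul M x y))).
    { rewrite <- (fidem_comm M Ixy Ir). rewrite <- !fmulA. reflexivity. }
    rewrite <- !fmulA. rewrite (fmulA M x (finv M x) (fmul M x y)), (fmulA M (fmul M x (finv M x)) x y), finv_l.
    exact H2'. }
  transitivity (fmul M (fmul M (fmul M (finv M x) x) y) (fmul M x (finv M x))).
  { rewrite A. symmetry. exact B. }
  rewrite <- !fmulA. rewrite (fmulA M x y (fmul M x (finv M x))), (fmulA M (fmul M x y) x (finv M x)), H1.
  rewrite fmulA. apply finv_r.
Qed.

Lemma inv_idem_mul (M : FInvMonoid) (f m : M) : fmul M f f = f ->
  finv M (fmul M f m) = fmul M (finv M m) f.
Proof.
  intros If. pose proof (fidem_inv_r M m) as Ir. symmetry. apply inv_uniq.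
  - rewrite <- !fmulA. rewrite (fmulA M m (finv M m) (fmul M f (fmul M f m))).
    rewrite (fmulA M f f m), If. rewrite (fmulA M (fmul M m (finv M m)) f m).
    rewrite <- (fidem_comm M If Ir). rewrite <- !fmulA. rewrite (fmulA M f f), If.
    rewrite (fmulA M m (finv M m) m), finv_l. reflexivity.
  - rewrite <- !fmulA. rewrite (fmulA M f f), If.
    rewrite (fmulA M m (finv M m) f). rewrite (fmulA M f (fmul M m (finv M m)) f).
    rewrite (fidem_comm M If Ir). rewrite <- !fmulA. rewrite If.
    rewrite (fmulA M (finv M m) m), (fmulA M (fmul M (finv M m) m) (finv M m)), finv_r. reflexivity.
Qed.

Lemma sig_fm (M : FInvMonoid) (s : M) : fmul M (fmul M s (finv M s)) (fm M s) = s.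
Proof.
  destruct (fm_max M s s) as [f [If Hf]].
  { exists (fone M). split; [apply fmul1l|reflexivity]. }
  set (m := fm M s) in *.
  assert (Hi : finv M s = fmul M (finv M m) f) by (rewrite Hf; apply inv_idem_mul; auto).
  rewrite Hi. rewrite Hf. pose proof (fidem_inv_r M m) as Ir.
  rewrite <- !fmulA. rewrite (fmulA M m (finv M m) (fmul M f m)), (fmulA M (fmul M m (finv M m)) f m).
  rewrite (fidem_comm M Ir If). rewrite <- !fmulA. rewrite (fmulA M m (finv M m) m), finv_l.
  rewrite (fmulA M f f m), If. reflexivity.
Qed.

Lemma eqG_TM X (R : imterm X -> imterm X -> Prop) t : eqG R (TM t) t.
Proof.
  exists (TMul t (TInv t)). split; intros M phi HR; simpl.
  - apply fidem_inv_r.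
  - rewrite sig_fm. symmetry. apply finv_l.
Qed.

Create HintDb reps.
#[export] Hint Resolve rep_mul rep_inv rep_fm rep_one : reps.

Ltac fsimp := repeat first [ erewrite Fit_mulE by (eauto 12 with reps) | erewrite Fit_invE by (eauto 12 with reps)
  | erewrite Fit_fmE by (eauto 12 with reps) | erewrite Fit_oneE by (eauto 12 with reps) ].

Lemma M_assoc X (R : imterm X -> imterm X -> Prop) (Rsym : forall u v, R u v -> R v u) (a b c : elt R) :
  mul Rsym a (mul Rsym b c) = mul Rsym (mul Rsym a b) c.
Proof.
  destruct (rep_ex a) as [ka Ha]; destruct (rep_ex b) as [kb Hb]; destruct (rep_ex c) as [kc Hc].
  apply elt_eq_fit with (TMul ka (TMul kb kc)); [eauto 12 with reps| |].
  { eapply rep_E; [eauto 12 with reps|]. apply eqG_assoc. }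
  intros D HD. fsimp.
  fitE. tauto.
Qed.

Ltac prep a ka Ha := destruct (rep_ex a) as [ka Ha].

Lemma M_1l X (R : imterm X -> imterm X -> Prop) (Rsym : forall u v, R u v -> R v u) (a : elt R) :
  mul Rsym (one Rsym) a = a.
Proof.
  prep a ka Ha. apply elt_eq_fit with ka; [|auto|].
  { eapply rep_E; [eauto 12 with reps|]. apply eqG_1l. }
  intros D HD. fsimp. fitE. split; [tauto|]. intro H; split; auto.
  apply (Fit_el HD Ha H).
Qed.

Lemma M_1r X (R : imterm X -> imterm X -> Prop) (Rsym : forall u v, R u v -> R v u) (a : elt R) :
  mul Rsym a (one Rsym) = a.
Proof.
  prep a ka Ha. apply elt_eq_fit with ka; [|auto|].
  { eapply rep_E; [eauto 12 with reps|]. apply eqG_1r. }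
  intros D HD. fsimp. fitE. split; [tauto|]. intro H; split; auto.
  apply (Fit_el HD Ha H).
Qed.

Lemma M_invl X (R : imterm X -> imterm X -> Prop) (Rsym : forall u v, R u v -> R v u) (a : elt R) :
  mul Rsym (mul Rsym a (inv Rsym a)) a = a.
Proof.
  prep a ka Ha. apply elt_eq_fit with ka; [|auto|].
  { eapply rep_E; [eauto 12 with reps|]. gsolve. }
  intros D HD. fsimp. fitE. tauto.
Qed.

Lemma M_invr X (R : imterm X -> imterm X -> Prop) (Rsym : forall u v, R u v -> R v u) (a : elt R) :
  mul Rsym (mul Rsym (inv Rsym a) a) (inv Rsym a) = inv Rsym a.
Proof.
  prep a ka Ha. apply elt_eq_fit with (TInv ka); [| eauto 12 with reps|].
  { eapply rep_E; [eauto 12 with reps|]. gsolve. }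
  intros D HD. fsimp. fitE. tauto.
Qed.

Lemma M_idem_tt X (R : imterm X -> imterm X -> Prop) (Rsym : forall u v, R u v -> R v u) (t : elt R) :
  mul Rsym (mul Rsym t (inv Rsym t)) (mul Rsym t (inv Rsym t)) = mul Rsym t (inv Rsym t).
Proof.
  prep t kt Ht. apply elt_eq_fit with TOne.
  { eapply rep_E; [eauto 12 with reps|]. gsolve. }
  { eapply rep_E; [eauto 12 with reps|]. gsolve. }
  intros D HD. fsimp. fitE. tauto.
Qed.

Lemma idem_one X (R : imterm X -> imterm X -> Prop) (Rsym : forall u v, R u v -> R v u) (e : elt R) ke :
  rep e ke -> mul Rsym e e = e -> eqG R ke TOne.
Proof.
  intros He H. assert (H1 : rep (mul Rsym e e) (TMul ke ke)) by eauto 12 with reps.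
  rewrite H in H1. pose proof (rep_uniq He H1) as H2.
  apply eqG_cancel_l with ke. rewrite eqG_1r. symmetry; auto.
Qed.

Lemma M_comm X (R : imterm X -> imterm X -> Prop) (Rsym : forall u v, R u v -> R v u) (e f : elt R) :
  mul Rsym e e = e -> mul Rsym f f = f -> mul Rsym e f = mul Rsym f e.
Proof.
  prep e ke He. prep f kf Hf. intros Ie If.
  pose proof (idem_one He Ie) as E1. pose proof (idem_one Hf If) as E2.
  apply elt_eq_fit with TOne.
  { eapply rep_E; [eauto 12 with reps|]. gsolve. }
  { eapply rep_E; [eauto 12 with reps|]. gsolve. }
  intros D HD. fsimp. fitE. tauto.
Qed.

Lemma M_sigma X (R : imterm X -> imterm X -> Prop) (Rsym : forall u v, R u v -> R v u) (s : elt R) :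
  exists e, mul Rsym e e = e /\ mul Rsym e (fmE Rsym s) = mul Rsym e s.
Proof.
  exists (mul Rsym s (inv Rsym s)). split; [apply M_idem_tt|].
  prep s ks Hs. apply elt_eq_fit with ks.
  { eapply rep_E; [eauto 12 with reps|]. gsolve. }
  { eapply rep_E; [eauto 12 with reps|]. gsolve. }
  intros D HD. fsimp. fitE. split.
  - intros [[H1 H2] [H3 H4]]. tauto.
  - intros [[H1 H2] H3]. destruct (Fit_el HD Hs H1) as [V1 V2]. split; [tauto|split; vfin].
Qed.

Lemma M_max X (R : imterm X -> imterm X -> Prop) (Rsym : forall u v, R u v -> R v u) (s t : elt R) :
  (exists e, mul Rsym e e = e /\ mul Rsym e t = mul Rsym e s) ->
  exists e, mul Rsym e e = e /\ t = mul Rsym e (fmE Rsym s).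
Proof.
  intros [e [Ie Et]]. prep e ke He. prep s ks Hs. prep t kt Ht.
  pose proof (idem_one He Ie) as E1.
  assert (Hts : eqG R kt ks).
  { assert (H1 : rep (mul Rsym e t) (TMul ke kt)) by eauto 12 with reps.
    assert (H2 : rep (mul Rsym e s) (TMul ke ks)) by eauto 12 with reps.
    rewrite Et in H1. pose proof (rep_uniq H1 H2) as H3. rewrite E1, !eqG_1l in H3. auto. }
  exists (mul Rsym t (inv Rsym t)). split; [apply M_idem_tt|].
  apply elt_eq_fit with kt; [auto| |].
  { eapply rep_E; [eauto 12 with reps|]. rewrite Hts. gsolve. }
  intros D HD. fsimp. fitE. split.
  - intros H1. destruct (Fit_el HD Ht H1) as [V1 V2]. split; [tauto|split; [vfin|]].
    apply (VE (R:=R) (g:=TMul TOne kt)); [apply (proj1 HD)| |auto]. rewrite Hts. gsolve.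
  - tauto.
Qed.

Definition Mod X (R : imterm X -> imterm X -> Prop) (Rsym : forall u v, R u v -> R v u) : FInvMonoid :=
  {| fcar := elt R; fmul := mul Rsym; fone := one Rsym; finv := inv Rsym; fm := fmE Rsym;
     fmulA := @M_assoc X R Rsym; fmul1l := @M_1l X R Rsym; fmul1r := @M_1r X R Rsym;
     finv_l := @M_invl X R Rsym; finv_r := @M_invr X R Rsym; fidem_comm := @M_comm X R Rsym;
     fm_sigma := @M_sigma X R Rsym; fm_max := @M_max X R Rsym |}.

Arguments Mod {X R} Rsym.

Definition phi_ok X (R : imterm X -> imterm X -> Prop) (Rsym : forall u v, R u v -> R v u) (x : X) :
  okE R (cl R (Ex R x)) (eqG R (TVar x)).
Proof.
  split; [apply cl_cs; auto|]. split.
  - apply cl_ext. simpl. left. reflexivity.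
  - exists (TVar x); split; auto. apply cl_ext. simpl. right. reflexivity.
Qed.

Arguments phi_ok {X R} Rsym x.

Definition phi X (R : imterm X -> imterm X -> Prop) (Rsym : forall u v, R u v -> R v u) (x : X)
  : Mod Rsym := mkE _ _ (phi_ok Rsym x).

Arguments phi {X R} Rsym x.

Lemma eval_rep X (R : imterm X -> imterm X -> Prop) (Rsym : forall u v, R u v -> R v u) (t : term X) :
  rep (eval (phi Rsym) t) t.
Proof.
  induction t; simpl.
  - unfold rep; reflexivity.
  - apply rep_one.
  - apply rep_mul; auto.
  - apply rep_inv; auto.
  - eapply rep_E; [apply rep_fm; eauto|]. symmetry; apply eqG_TM.
Qed.

Arguments eval_rep {X R} Rsym t.

Lemma Fit_lterm X (R : imterm X -> imterm X -> Prop) (Rsym : forall u v, R u v -> R v u) g D a :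
  cs R D -> (Fit g (eA (eval (phi Rsym) (lterm a))) D <-> gE D g a).
Proof.
  intros HD. pose proof (proj1 HD) as HS. pose proof HS as [S1 [S2 [S3 S4]]].
  destruct a as [x []]; cbn [lterm fst snd eval fmul fone finv fm Mod].
  - rewrite (Fit_invE Rsym (a:=phi Rsym x) (ka := TVar x) g HD) by (unfold rep; reflexivity).
    simpl. rewrite (Fit_cl _ _ HD), (Fit_Ex _ _ HS). split; intro H.
    + pose proof (S4 _ _ H) as H'. simpl in H'. eapply S2; [|exact H']. gsolve.
    + pose proof (S4 _ _ H) as H'. simpl in H'. exact H'.
  - simpl. rewrite (Fit_cl _ _ HD), (Fit_Ex _ _ HS). tauto.
Qed.

Arguments Fit_lterm {X R} Rsym g D a.

Lemma Fit_path X (R : imterm X -> imterm X -> Prop) (Rsym : forall u v, R u v -> R v u) D u :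
  cs R D -> forall g, (Fit g (eA (eval (phi Rsym) (wterm u))) D <-> path_in D g u).
Proof.
  intros HD. induction u as [|a u IH]; intros g; cbn [eval wterm fmul fone finv fm Mod].
  - apply (Fit_oneE Rsym g HD).
  - rewrite (Fit_mulE Rsym _ g HD (eval_rep Rsym (lterm a))).
    rewrite Fit_lterm by auto. rewrite IH. simpl. tauto.
Qed.

Arguments Fit_path {X R} Rsym D u.

Lemma Fit_journey X (R : imterm X -> imterm X -> Prop) (Rsym : forall u v, R u v -> R v u) D l :
  cs R D -> forall u0 g, (Fit g (eA (eval (phi Rsym) (imterm_aux u0 l))) D <-> journey_paths D g u0 l).
Proof.
  intros HD. induction l as [|[v u] l IH]; intros u0 g; cbn [eval imterm_aux fmul fone finv fm Mod].
  - apply Fit_path; auto.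
  - rewrite (Fit_mulE Rsym _ g HD (eval_rep Rsym (wterm u0))).
    rewrite (Fit_mulE Rsym _ _ HD (rep_fm Rsym (eval_rep Rsym (wterm v)))).
    rewrite (Fit_fmE Rsym _ HD (eval_rep Rsym (wterm v))).
    rewrite Fit_path by auto. rewrite IH. split.
    + simpl. tauto.
    + simpl. intros [H1 H2]. split; auto. split; [split|auto].
      * eapply path_end; [apply HD|exact H1].
      * eapply journey_start; [apply HD|exact H2].
Qed.

Arguments Fit_journey {X R} Rsym D l.

Lemma phiR X (R : imterm X -> imterm X -> Prop) (Rsym : forall u v, R u v -> R v u) :
  forall p q, R p q -> eval (phi Rsym) (imt p) = eval (phi Rsym) (imt q).
Proof.
  assert (Le : forall p q, R p q ->
     subgraph_le (eA (eval (phi Rsym) (imt q))) (eA (eval (phi Rsym) (imt p)))).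
  { intros p q Rpq. set (K := eval (phi Rsym) (imt p)).
    pose proof (rep_cs K) as HK.
    apply (Fit_one (R:=R)); [apply HK|]. apply Fit_journey; auto.
    assert (J : journey_paths (eA K) TOne (fst p) (snd p)).
    { apply (Fit_journey Rsym (eA K) (snd p) HK). apply (Fit_one (R:=R)); [apply HK|]. apply le_refl. }
    assert (LJ : labels_journey R (eA K) p TOne (imt p)) by (split; [apply eqG_1l|exact J]).
    apply (proj2 HK p q Rpq TOne (imt p) (rep_1 K) (rep_V (eval_rep Rsym (imt p)))) in LJ.
    apply LJ. }
  intros p q Rpq. apply elt_eq.
  - apply le_antisym; apply Le; auto.
  - pose proof (eval_rep Rsym (imt p)) as H1. pose proof (eval_rep Rsym (imt q)) as H2.
    unfold rep in *. rewrite H1, H2. apply eqG_fun. apply eqS_eqG. apply R_eqS; auto.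
Qed.

Lemma closed_R_S X (R : imterm X -> imterm X -> Prop) (Rsym : forall u v, R u v -> R v u) D :
  is_subgraph R D -> cQ_closed R R D -> cQ_closed R (QS R) D.
Proof.
  intros HS HC u v Quv g h Hg Hh.
  assert (HD : cs R D) by (split; auto).
  assert (Ev : eval (phi Rsym) (imt u) = eval (phi Rsym) (imt v)) by (apply (Quv (Mod Rsym)); apply phiR).
  assert (EG : eqG R (imt u) (imt v)) by (apply eqS_eqG; auto).
  unfold labels_journey.
  rewrite <- (Fit_journey Rsym D (snd u) HD (fst u) g), <- (Fit_journey Rsym D (snd v) HD (fst v) g).
  change (imterm_aux (fst u) (snd u)) with (imt u). change (imterm_aux (fst v) (snd v)) with (imt v).
  rewrite Ev.
  split; intros [H1 H2]; split; auto.
  - rewrite <- EG; auto.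
  - rewrite EG; auto.
Qed.

Lemma closed_S_R X (R : imterm X -> imterm X -> Prop) D :
  cQ_closed R (QS R) D -> cQ_closed R R D.
Proof. intros HC u v Ruv. apply HC. apply R_eqS; auto. Qed.

Theorem mainTheorem10 (X : Type) (R : imterm X -> imterm X -> Prop)
  (Rsym : forall u v, R u v -> R v u) :
  forall D : graph X, is_subgraph R D ->
    same_graph (cQ_closure R R D) (cQ_closure R (QS R) D).
Proof.
  intros D _. split; simpl; [intros g|intros g a]; split; intros H D' S C L; apply H; auto.
  - apply closed_S_R; auto.
  - apply closed_R_S; auto.
  - apply closed_S_R; auto.
  - apply closed_R_S; auto.
Qed.
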